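(* Let $\mathfrak S$ be a commutative Noetherian semiring. Then for every set $\sigma_{\mathfrak S}$ of ideals of $\mathfrak S$, the space $\sigma_{\mathfrak S}$ with the ideal topology is a Noetherian topological space.
   Context: A semiring $(\mathfrak S,+,0,\cdot,1)$ has $(\mathfrak S,+,0)$ a commutative monoid, $(\mathfrak S,\cdot,1)$ a monoid, $0r=r0=0$, and two-sided distributivity; all semirings are commutative. An ideal is a nonempty proper subset closed under addition and under multiplication by elements of $\mathfrak S$. Noetherian semiring: every ideal is finitely generated. For an ideal $\mathfrak a$, $\mathfrak a^{\uparrow}=\{\mathfrak x\in\sigma_{\mathfrak S}\mid\mathfrak a\subseteq\mathfrak x\}$; the ideal topology on $\sigma_{\mathfrak S}$ has the sets $\mathfrak a^{\uparrow}$ ($\mathfrak a$ any ideal) as a subbasis of closed sets. A Noetherian topological space is one satisfying the descending chain condition on closed subsets. *)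

(* Defs.v *)
(* Commutative semirings = comPzSemiRingType (0 = 1 allowed,
   as in the paper's definition). Subsets of S are predicates S -> Prop. *)
From mathcomp Require Import all_boot all_algebra.
Set Implicit Arguments. Unset Strict Implicit. Unset Printing Implicit Defensive.
Import GRing.Theory.
Local Open Scope ring_scope.

Definition is_ideal (S : comPzSemiRingType) (a : S -> Prop) : Prop :=
  (exists x, a x) /\ (exists y, ~ a y) /\
  (forall x y, a x -> a y -> a (x + y)) /\
  (forall r x, a x -> a (r * x)).

Definition fin_span (S : comPzSemiRingType) (s : seq S) : S -> Prop :=
  fun x => exists c : 'I_(size s) -> S, x = \sum_(i < size s) c i * s`_i.

Definition finitely_generated (S : comPzSemiRingType) (a : S -> Prop) : Prop :=
  exists s : seq S, forall x, a x <-> fin_span s x.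

Definition noetherian_semiring (S : comPzSemiRingType) : Prop :=
  forall a : S -> Prop, is_ideal a -> finitely_generated a.

(* Ideal topology on sigma (a set of ideals): the sets
   a^up = {x in sigma | a ⊆ x}, a any ideal, form a subbasis of closed sets. *)
Definition ideal_up (S : comPzSemiRingType) (sigma : (S -> Prop) -> Prop)
  (a : S -> Prop) : (S -> Prop) -> Prop :=
  fun x => sigma x /\ (forall r, a r -> x r).

Definition ideal_basic_closed (S : comPzSemiRingType)
  (sigma : (S -> Prop) -> Prop) (B : (S -> Prop) -> Prop) : Prop :=
  exists (n : nat) (a : 'I_n -> (S -> Prop)),
    (forall i, is_ideal (a i)) /\
    (forall x, B x <-> exists i, ideal_up sigma (a i) x).

Definition ideal_closed (S : comPzSemiRingType)
  (sigma : (S -> Prop) -> Prop) (C : (S -> Prop) -> Prop) : Prop :=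
  exists F : ((S -> Prop) -> Prop) -> Prop,
    (forall B, F B -> ideal_basic_closed sigma B) /\
    (forall x, C x <-> (sigma x /\ forall B, F B -> B x)).

Definition ideal_topology_noetherian (S : comPzSemiRingType)
  (sigma : (S -> Prop) -> Prop) : Prop :=
  forall C : nat -> ((S -> Prop) -> Prop),
    (forall n, ideal_closed sigma (C n)) ->
    (forall n x, C n.+1 x -> C n x) ->
    exists N, forall n, (N <= n)%N -> forall x, C n x <-> C N x.

(* Main.v *)
Require Import Defs.
From mathcomp Require Import all_boot all_algebra.
From Stdlib Require Import Classical IndefiniteDescription.
Set Implicit Arguments. Unset Strict Implicit. Unset Printing Implicit Defensive.
Import GRing.Theory.
Local Open Scope ring_scope.

Section Proof.
Variable S : comPzSemiRingType.

Lemma ideal0 (a : S -> Prop) : is_ideal a -> a 0.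
Proof. move=> [[u au] [_ [_ hm]]]; rewrite -(mul0r u); exact: hm. Qed.

Lemma ideal_sum (a : S -> Prop) n (F : 'I_n -> S) :
  is_ideal a -> (forall i, a (F i)) -> a (\sum_(i < n) F i).
Proof.
move=> ha hF; apply: (big_ind a) => //; first exact: ideal0.
by move=> x y; case: ha => [_ [_ [hp _]]]; apply: hp.
Qed.

Lemma max_choice n (P : 'I_n -> nat -> Prop) :
  (forall i, exists N, P i N) ->
  exists f : 'I_n -> nat, forall i, P i (f i).
Proof.
move=> H; exists (fun i => proj1_sig (constructive_indefinite_description _ (H i))).
by move=> i; case: (constructive_indefinite_description _ (H i)).
Qed.

Lemma acc_false (c : nat -> S -> Prop) :
  noetherian_semiring S ->
  (forall k, is_ideal (c k)) -> (forall k r, c k r -> c k.+1 r) ->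
  (forall k, exists r, c k.+1 r /\ ~ c k r) -> False.
Proof.
move=> hN hid hinc hstr.
have mono : forall k l r, (k <= l)%N -> c k r -> c l r.
  move=> k l r /subnK <-; elim: (l - k)%N => [//|d IH] h.
  by rewrite addSn; apply: hinc; apply: IH.
pose U := fun x => exists k, c k x.
have hU : is_ideal U.
  split; first by case: (hid 0%N) => [[u hu] _]; exists u, 0%N.
  split.
    exists 1 => [[k hk]]; case: (hid k) => [_ [[y hy] [_ hm]]]; apply: hy.
    by rewrite -(mulr1 y); apply: hm.
  split.
    move=> x y [k hk] [l hl]; exists (maxn k l).
    case: (hid (maxn k l)) => [_ [_ [hp _]]]; apply: hp.
      by apply: (mono k) => //; rewrite leq_maxl.
    by apply: (mono l) => //; rewrite leq_maxr.
  by move=> r x [k hk]; exists k; case: (hid k) => [_ [_ [_ hm]]]; apply: hm.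
case: (hN U hU) => s hs.
have gen : forall i : 'I_(size s), U s`_i.
  move=> i; apply/hs; exists (fun j => if j == i then 1 else 0).
  rewrite (bigD1 i) //= eqxx mul1r big1 ?addr0 // => j /negbTE ->.
  by rewrite mul0r.
have [f hf] := @max_choice _ (fun i k => c k s`_i) gen.
pose K := (\max_(i < size s) f i)%N.
have hK : forall x, U x -> c K x.
  move=> x /hs [co ->]; apply: ideal_sum => // i.
  case: (hid K) => [_ [_ [_ hm]]]; apply: hm.
  by apply: (mono (f i)) => //; apply: leq_bigmax.
case: (hstr K) => r [h1 h2]; apply: h2; apply: hK; by exists K.+1.
Qed.

Definition R (b a : S -> Prop) : Prop :=
  is_ideal b /\ (forall r, a r -> b r) /\ exists r, b r /\ ~ a r.

Lemma R_wf : noetherian_semiring S -> forall a, Acc R a.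
Proof.
move=> hN a0; apply: NNPP => h0.
have step : forall a, ~ Acc R a -> exists b, R b a /\ ~ Acc R b.
  move=> a ha; apply: NNPP => hb; apply: ha; constructor => b rb.
  by apply: NNPP => nb; apply: hb; exists b.
pose T := {a | ~ Acc R a}.
have g : forall t : T, {t' : T | R (proj1_sig t') (proj1_sig t)}.
  move=> [a ha]; have [b hb] := constructive_indefinite_description _ (step a ha).
  by exists (exist _ b (proj2 hb)); exact: (proj1 hb).
pose gf := fun t => proj1_sig (g t).
pose sq := fun k => iter k gf (exist _ a0 h0).
have hR : forall k, R (proj1_sig (sq k.+1)) (proj1_sig (sq k)).
  move=> k; rewrite /sq iterS; exact: (proj2_sig (g _)).
apply: (@acc_false (fun k => proj1_sig (sq k.+1)) hN).
- by move=> k; case: (hR k : is_ideal _ /\ _).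
- by move=> k r; case: (hR k.+1 : is_ideal _ /\ _) => _ [h _]; exact: h.
- by move=> k; case: (hR k.+1 : is_ideal _ /\ _) => _ [_ h].
Qed.

End Proof.

Theorem corollary3p8 (S : comPzSemiRingType) :
  noetherian_semiring S ->
  forall sigma : (S -> Prop) -> Prop,
    (forall x, sigma x -> is_ideal x) ->
    ideal_topology_noetherian sigma.
Proof.
move=> hN sigma hsig C hC hdec.
have desc : forall n m x, (n <= m)%N -> C m x -> C n x.
  move=> n m x /subnK <-; elim: (m - n)%N => [//|d IH] h.
  by apply: IH; apply: hdec; rewrite -addSn.
pose Up := ideal_up sigma.
pose Stab := fun a : S -> Prop => exists N, forall m, (N <= m)%N ->
   forall x, Up a x -> C N x -> C m x.
have key : forall a, Stab a.
  move=> a; elim: (R_wf hN a) => {}a _ IH.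
  case: (classic (forall n x, Up a x -> C n x)) => [hall|].
    by exists 0%N => m _ x hx _; apply: hall.
  move=> /not_all_ex_not [n /not_all_ex_not [x0 hx0]].
  have [hux0 hnc] := imply_to_and _ _ hx0.
  case: (hC n) => F [hFb hFC].
  have [B [hB hnB]] : exists B, F B /\ ~ B x0.
    apply: NNPP => hh; apply: hnc; apply/hFC; split; first by case: hux0.
    by move=> B hB; apply: NNPP => nb; apply: hh; exists B.
  case: (hFb B hB) => k [ai [hai hBe]].
  have st : forall i, exists N, forall m, (N <= m)%N ->
      forall y, Up a y -> Up (ai i) y -> C N y -> C m y.
    move=> i.
    case: (classic (exists y0, Up a y0 /\ Up (ai i) y0)); last first.
      by move=> hne; exists 0%N => m _ y h1 h2; case: hne; exists y.
    move=> [y0 [hy0a hy0i]].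
    pose b := fun r => forall y, Up a y -> Up (ai i) y -> y r.
    have hbR : R b a.
      split.
        split; first by case: (hai i) => [[u hu] _]; exists u => y _ [_ h]; exact: h.
        split.
          case: (hsig y0 (proj1 hy0a)) => _ [[v hv] _]; exists v => hb.
          by apply: hv; apply: hb.
        split.
          move=> u v hu hv y h1 h2; case: (hsig y (proj1 h1)) => _ [_ [hp _]].
          by apply: hp; [apply: hu|apply: hv].
        move=> r u hu y h1 h2; case: (hsig y (proj1 h1)) => _ [_ [_ hm]].
        by apply: hm; apply: hu.
      split; first by move=> r hr y [_ h] _; apply: h.
      apply: NNPP => hh; apply: hnB; apply/hBe; exists i; split; first by case: hux0.
      move=> r hr; apply: NNPP => nr; apply: hh; exists r; split.
        by move=> y _ [_ h]; apply: h.
      by move=> ar; apply: nr; case: hux0 => _ h; apply: h.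
    case: (IH b hbR) => N hN'; exists N => m hm y h1 h2 hc.
    apply: (hN' m hm y) => //; split; first by case: h1.
    by move=> r hr; apply: hr.
  have [f hf] := @max_choice _ (fun i N => forall m, (N <= m)%N ->
      forall y, Up a y -> Up (ai i) y -> C N y -> C m y) st.
  exists (maxn n (\max_(i < k) f i)) => m hm y hy hc.
  have hfi : forall i, (f i <= maxn n (\max_(i < k) f i))%N.
    by move=> i; apply: leq_trans (leq_maxr _ _); apply: leq_bigmax.
  have : B y.
    have := desc n _ y (leq_maxl n (\max_(i < k) f i)) hc.
    by move/hFC => [_ h]; apply: h.
  move/hBe => [i hi].
  apply: (hf i) => //; first by apply: leq_trans hm.
  exact: (desc _ _ _ (hfi i) hc).
case: (key (fun _ => False)) => N hN'.
exists N => n hn x; split; first exact: desc.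
move=> hc; apply: (hN' n hn x) => //; split.
  by case: (hC N) => F [_ /(_ x) [h _]]; case: (h hc).
by [].
Qed.
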